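(* Let $\Pi$ be a $3$-decomposable $30$-half-period with classes $A,B,C$. Then $N_k^{bi}(\Pi)=30$ for $k=11,12,13,14$.
   Context: An allowable sequence on an $n$-element set is a doubly infinite sequence of permutations of the set (lists on positions $1,\dots,n$) in which consecutive permutations differ by swapping two adjacent elements (a transposition) and $\pi_{i+\binom n2}$ is the reverse of $\pi_i$; an $n$-half-period is a block $(\pi_0,\dots,\pi_{\binom n2})$ of consecutive permutations (each pair of elements is swapped exactly once in it). A transposition swapping the elements in positions $i,i+1$ is an $i$-transposition; for $1\le k\le n/2$ it is $k$-critical if it is a $k$-transposition or an $(n-k)$-transposition. An $n$-half-period $\Pi$ ($3\mid n$) is $3$-decomposable if its elements can be labeled $A=\{a_1,\dots,a_{n/3}\}$, $B=\{b_1,\dots,b_{n/3}\}$, $C=\{c_1,\dots,c_{n/3}\}$ so that its first permutation is $(a_{n/3},\dots,a_1,b_1,\dots,b_{n/3},c_1,\dots,c_{n/3})$, every transposition between an element of $A$ and an element of $B$ occurs before every transposition between an element of $C$ and an element of $A\cup B$, and every transposition between $A$ and $C$ occurs before every transposition between $B$ and $C$. A transposition is bichromatic if its two elements lie in different classes among $A,B,C$. $N_k^{bi}(\Pi)$ is the number of bichromatic $k$-critical transpositions of $\Pi$. *)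

(* Defs.v *)
From mathcomp Require Import all_boot all_fingroup.
Set Implicit Arguments. Unset Strict Implicit. Unset Printing Implicit Defensive.

(* A permutation (list on positions) is
   p : {perm 'I_n}, where p j is the element at (0-indexed) position j,
   i.e. at the paper's position j+1.
   A sequence of permutations is pi : nat -> {perm 'I_n} (only indices
   0..'C(n,2) matter), together with s : nat -> nat giving the 0-indexed
   position of the swap performed between pi t and pi t.+1: the elements
   at positions s t and (s t).+1 are exchanged, i.e. this is a
   ((s t).+1)-transposition in the paper's 1-indexed convention. *)

Definition adj_step (n : nat) (p q : {perm 'I_n}) (i : nat) : Prop :=
  [/\ i.+1 < n,
      (forall x y : 'I_n, val x = i -> val y = i.+1 -> q x = p y /\ q y = p x) &
      (forall x : 'I_n, val x <> i -> val x <> i.+1 -> q x = p x)].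

Definition swapped (n : nat) (pi : nat -> {perm 'I_n}) (s : nat -> nat)
    (t : nat) (x y : 'I_n) : bool :=
  [exists i : 'I_n, exists j : 'I_n,
     [&& val i == s t, val j == (s t).+1, pi t i == x & pi t j == y]].

Definition half_period (n : nat) (pi : nat -> {perm 'I_n}) (s : nat -> nat) : Prop :=
  (forall t, t < 'C(n, 2) -> adj_step (pi t) (pi t.+1) (s t)) /\
  (forall x y : 'I_n, x != y ->
     #|[set t : 'I_('C(n, 2)) | swapped pi s t x y || swapped pi s t y x]| = 1).

Definition swap_between (n : nat) (pi : nat -> {perm 'I_n}) (s : nat -> nat)
    (t : nat) (P Q : pred 'I_n) : bool :=
  [exists x : 'I_n, exists y : 'I_n,
     swapped pi s t x y && ((P x && Q y) || (Q x && P y))].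

(* 3-decomposability of a half-period on n = 3m elements with labeling
   a_{l+1} = a l, b_{l+1} = b l, c_{l+1} = c l (l : 'I_m, 0-indexed). *)
Definition decomposition3 (m : nat) (pi : nat -> {perm 'I_(3 * m)}) (s : nat -> nat)
    (a b c : 'I_m -> 'I_(3 * m)) : Prop :=
  let inA := fun x => x \in codom a in
  let inB := fun x => x \in codom b in
  let inC := fun x => x \in codom c in
  [/\ (* first permutation (a_m,...,a_1,b_1,...,b_m,c_1,...,c_m) *)
      (forall (j : 'I_(3 * m)) (l : 'I_m),
         [/\ val j = m - 1 - val l -> pi 0 j = a l,
             val j = m + val l -> pi 0 j = b l &
             val j = 2 * m + val l -> pi 0 j = c l]),
      (forall t t' : 'I_('C(3 * m, 2)),
         swap_between pi s t inA inB ->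
         swap_between pi s t' inC (fun x => inA x || inB x) -> t < t') &
      (forall t t' : 'I_('C(3 * m, 2)),
         swap_between pi s t inA inC -> swap_between pi s t' inB inC -> t < t')].

(* a transposition at (1-indexed) position i is k-critical *)
Definition critical (n k i : nat) : bool := (i == k) || (i == n - k).

Definition N_bi (m : nat) (pi : nat -> {perm 'I_(3 * m)}) (s : nat -> nat)
    (a b c : 'I_m -> 'I_(3 * m)) (k : nat) : nat :=
  let same := fun x y : 'I_(3 * m) =>
    [|| (x \in codom a) && (y \in codom a),
        (x \in codom b) && (y \in codom b) |
        (x \in codom c) && (y \in codom c)] in
  #|[set t : 'I_('C(3 * m, 2)) | critical (3 * m) k (s t).+1 &&
       [exists x, exists y, swapped pi s t x y && ~~ same x y]]|.

(* Main.v *)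
Require Import Defs.
From mathcomp Require Import all_boot all_fingroup zify.
Set Implicit Arguments. Unset Strict Implicit. Unset Printing Implicit Defensive.

Definition pos n (p : {perm 'I_n}) (x : 'I_n) : nat := val (p^-1 x)%g.
Definition swn (i q : nat) : nat := if q == i then i.+1 else if q == i.+1 then i else q.

Lemma pos_lt n (p : {perm 'I_n}) x : pos p x < n.
Proof. exact: ltn_ord. Qed.

Lemma pos_eq n (p : {perm 'I_n}) x y : (pos p x == pos p y) = (x == y).
Proof. by rewrite /pos val_eqE (inj_eq (@perm_inj _ _)). Qed.

Lemma pos_app n (p : {perm 'I_n}) q : pos p (p q) = val q.
Proof. by rewrite /pos permK. Qed.

Lemma pos_of n (p : {perm 'I_n}) x (q : 'I_n) : p q = x -> pos p x = val q.
Proof. by move=> <-; rewrite pos_app. Qed.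

Lemma pos_step n (p p' : {perm 'I_n}) i x : adj_step p p' i ->
  pos p' x = swn i (pos p x).
Proof.
case=> Hlt H1 H2.
have Hi : i < n by apply: ltnW.
set q := (p^-1 x)%g.
have Hq : p q = x by rewrite /q permKV.
rewrite /swn /pos -/q.
case: eqP => [E|N1].
  apply: (@pos_of _ p' x (Ordinal Hlt)).
  by case: (H1 q (Ordinal Hlt) E erefl) => _ ->.
case: eqP => [E|N2].
  apply: (@pos_of _ p' x (Ordinal Hi)).
  by case: (H1 (Ordinal Hi) q erefl E) => ->.
by apply: pos_of; rewrite H2.
Qed.

Lemma swappedE n (pi : nat -> {perm 'I_n}) s t x y :
  swapped pi s t x y = (pos (pi t) x == s t) && (pos (pi t) y == (s t).+1).
Proof.
apply/existsP/andP => [[i /existsP [j /and4P [/eqP Hi /eqP Hj /eqP Hx /eqP Hy]]]|[/eqP Hx /eqP Hy]].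
  by rewrite (pos_of Hx) (pos_of Hy) Hi Hj.
exists ((pi t)^-1 x)%g; apply/existsP; exists ((pi t)^-1 y)%g.
by rewrite !permKV !eqxx -/(pos _ x) -/(pos _ y) Hx Hy !eqxx.
Qed.

Lemma swn_lt i u v : u != v ->
  (swn i u < swn i v) = (u < v) (+) (((u == i) && (v == i.+1)) || ((v == i) && (u == i.+1))).
Proof.
rewrite /swn => Nuv.
case: (u =P i) => [Eu|Nu]; case: (v =P i) => [Ev|Nv];
  case: (u =P i.+1) => [Eu'|Nu']; case: (v =P i.+1) => [Ev'|Nv'] /=;
  try (exfalso; lia).
all: apply/idP/idP; lia.
Qed.
Lemma bef_step n (pi : nat -> {perm 'I_n}) s t x y : x != y ->
  adj_step (pi t) (pi t.+1) (s t) ->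
  (pos (pi t.+1) x < pos (pi t.+1) y) =
  (pos (pi t) x < pos (pi t) y) (+) (swapped pi s t x y || swapped pi s t y x).
Proof.
move=> Nxy H; rewrite !(pos_step x H) !(pos_step y H) swn_lt ?pos_eq //.
by rewrite !swappedE.
Qed.

Lemma tau_ex n (pi : nat -> {perm 'I_n}) s x y : half_period pi s -> x != y ->
  exists tau : 'I_('C(n, 2)), forall t : 'I_('C(n, 2)),
    (swapped pi s t x y || swapped pi s t y x) = (t == tau).
Proof.
case=> _ H Nxy; have /eqP/cards1P [tau Htau] := H x y Nxy.
exists tau => t; move/setP: Htau => /(_ t); rewrite !inE => ->; done.
Qed.
Lemma bef_tau n (pi : nat -> {perm 'I_n}) s x y (tau : 'I_('C(n, 2))) :
  half_period pi s -> x != y ->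
  (forall t : 'I_('C(n, 2)), (swapped pi s t x y || swapped pi s t y x) = (t == tau)) ->
  forall t, t <= 'C(n, 2) ->
  (pos (pi t) x < pos (pi t) y) = (pos (pi 0) x < pos (pi 0) y) (+) (tau < t).
Proof.
move=> [Hst _] Nxy Ht; elim=> [|t IH] Htl; first by rewrite ltn0 addbF.
rewrite (bef_step Nxy (Hst t Htl)) IH ?(ltnW Htl) //.
have := Ht (Ordinal Htl). rewrite /= => ->.
rewrite -addbA; congr (_ (+) _).
rewrite -val_eqE /=.
case: (t =P tau) => E2; rewrite ?addbT ?addbF.
- by rewrite E2 ltnn ltnSn.
- by apply/idP/idP; lia.
Qed.
Definition L n (p : {perm 'I_n}) (Y : pred 'I_n) (i : nat) : nat :=
  \sum_(x : 'I_n) (Y x && (pos p x < i)).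

Lemma sum_range n a b : \sum_(q < n) (a <= q < b) = minn n b - minn n a.
Proof.
elim: n => [|n IH]; first by rewrite big_ord0 !min0n.
rewrite big_ord_recr /= IH.
case: (leqP a n) => Ha; case: (ltnP n b) => Hb /=; lia.
Qed.

Lemma Lall n (p : {perm 'I_n}) i : i <= n -> \sum_(x : 'I_n) (pos p x < i) = i.
Proof.
move=> Hi; rewrite (reindex_inj (@perm_inj _ p)) /=.
under eq_bigr => q _ do rewrite pos_app -[q < i]/(0 <= q < i).
rewrite sum_range; lia.
Qed.

Lemma sum_eq1 (T : finType) (x : T) (P : T -> bool) :
  \sum_(z : T) ((z == x) && P z) = P x.
Proof.
rewrite (bigD1 x) //= eqxx big1 ?addn0 // => z /negbTE -> //.
Qed.

Lemma swn_nat s q i :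
  (swn s q < i) + ((q == s) && (s.+1 == i)) = (q < i) + ((q == s.+1) && (s.+1 == i)).
Proof.
rewrite /swn; case: (q =P s) => E1; case: (q =P s.+1) => E2; case: (s.+1 =P i) => E3 /=;
  try (exfalso; lia).
all: case: (ltnP _ i) => H1; case: (ltnP q i) => H2 //=; lia.
Qed.

Lemma Lstep n (pi : nat -> {perm 'I_n}) s t Y i x y :
  adj_step (pi t) (pi t.+1) (s t) -> swapped pi s t x y ->
  L (pi t.+1) Y i + (Y x && ((s t).+1 == i)) = L (pi t) Y i + (Y y && ((s t).+1 == i)).
Proof.
move=> H; rewrite swappedE => /andP [/eqP Hx /eqP Hy].
rewrite /L -(sum_eq1 x (fun z => Y z && ((s t).+1 == i))).
rewrite -(sum_eq1 y (fun z => Y z && ((s t).+1 == i))) -!big_split /=.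
apply: eq_bigr => z _.
rewrite -(pos_eq (pi t) z x) -(pos_eq (pi t) z y) Hx Hy (pos_step z H).
case: (Y z) => /=; last by rewrite /= !andbF.
exact: swn_nat.
Qed.
Lemma LG n (p : {perm 'I_n}) (Y : pred 'I_n) i : i <= n ->
  (forall y z, Y y -> ~~ Y z -> pos p z < i -> pos p y < pos p z) ->
  L p Y i = minn i (\sum_x Y x).
Proof.
move=> Hi H.
have Hle1 : L p Y i <= \sum_x Y x.
  by apply: leq_sum => x _; case: (Y x); case: (_ < i).
have Hle2 : L p Y i <= i.
  by rewrite -{2}(Lall p Hi); apply: leq_sum => x _; case: (Y x); case: (_ < i).
case: (boolP [exists z, ~~ Y z && (pos p z < i)]) => [/existsP [z /andP [Nz Hz]] | Hn].
- have E : L p Y i = \sum_x Y x.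
    apply: eq_bigr => w _; case Yw: (Y w) => //=.
    by rewrite (ltn_trans (H w z Yw Nz Hz) Hz).
  move: Hle2; rewrite E; lia.
- have E : L p Y i = \sum_x (pos p x < i).
    apply: eq_bigr => w _; case Hw: (pos p w < i); first rewrite andbT.
      case Yw: (Y w) => //; case/negP: Hn; apply/existsP; exists w; by rewrite Yw Hw.
    by rewrite andbF.
  move: Hle1; rewrite E Lall //; lia.
Qed.
Definition D1 (pi : nat -> {perm 'I_(3 * 10)}) (a b c : 'I_10 -> 'I_(3 * 10)) :=
  forall (j : 'I_(3 * 10)) (l : 'I_10),
    [/\ val j = 10 - 1 - val l -> pi 0 j = a l,
        val j = 10 + val l -> pi 0 j = b l &
        val j = 2 * 10 + val l -> pi 0 j = c l].

Lemma memA pi a b c x : D1 pi a b c -> (x \in codom a) = (pos (pi 0) x < 10).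
Proof.
move=> D; apply/codomP/idP => [[l ->]|Hx].
  have Hj : 10 - 1 - l < 3 * 10 by have := ltn_ord l; lia.
  case: (D (Ordinal Hj) l) => HA _ _; rewrite -(HA erefl) pos_app /=; lia.
have Hl : 10 - 1 - pos (pi 0) x < 10 by lia.
exists (Ordinal Hl); case: (D ((pi 0)^-1 x)%g (Ordinal Hl)) => HA _ _.
rewrite -HA ?permKV //=; move: Hx; rewrite /pos /=; set q := val _; lia.
Qed.

Lemma memB pi a b c x : D1 pi a b c -> (x \in codom b) = (10 <= pos (pi 0) x < 20).
Proof.
move=> D; apply/codomP/idP => [[l ->]|Hx].
  have Hj : 10 + l < 3 * 10 by have := ltn_ord l; lia.
  case: (D (Ordinal Hj) l) => _ HB _; rewrite -(HB erefl) pos_app /=; have := ltn_ord l; lia.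
have Hl : pos (pi 0) x - 10 < 10 by lia.
exists (Ordinal Hl); case: (D ((pi 0)^-1 x)%g (Ordinal Hl)) => _ HB _.
rewrite -HB ?permKV //=; move: Hx; rewrite /pos /=; set q := val _; lia.
Qed.

Lemma memC pi a b c x : D1 pi a b c -> (x \in codom c) = (20 <= pos (pi 0) x).
Proof.
move=> D; apply/codomP/idP => [[l ->]|Hx].
  have Hj : 2 * 10 + l < 3 * 10 by have := ltn_ord l; lia.
  case: (D (Ordinal Hj) l) => _ _ HC; rewrite -(HC erefl) pos_app /=; lia.
have Hl : pos (pi 0) x - 20 < 10 by have := pos_lt (pi 0) x; lia.
exists (Ordinal Hl); case: (D ((pi 0)^-1 x)%g (Ordinal Hl)) => _ _ HC.
rewrite -HC ?permKV //=; have := pos_lt (pi 0) x; move: Hx; rewrite /pos /=; set q := val _; lia.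
Qed.

Lemma S0 n (p : {perm 'I_n}) (P : nat -> bool) :
  \sum_(x : 'I_n) P (pos p x) = \sum_(q < n) P q.
Proof.
rewrite (reindex_inj (@perm_inj _ p)) /=.
by apply: eq_bigr => q _; rewrite pos_app.
Qed.

Lemma tele (f g : nat -> nat) t0 T : t0 <= T ->
  (forall t, t0 <= t -> t < T -> f t.+1 = f t + g t) ->
  f T = f t0 + \sum_(t0 <= t < T) g t.
Proof.
elim: T => [|T IH] H0 H.
  have -> : t0 = 0 by lia.
  by rewrite big_geq // addn0.
case: (ltnP t0 T.+1) => H1.
  rewrite big_nat_recr /=; last by lia.
  rewrite addnA -IH; last by move=> t Ht Ht2; apply: H => //; lia.
    by apply: H => //; lia.
  lia.
have -> : t0 = T.+1 by lia.
by rewrite big_geq // addn0.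
Qed.

Lemma Lstep2 n (pi : nat -> {perm 'I_n}) s t Y i x y (bb : bool) :
  adj_step (pi t) (pi t.+1) (s t) -> swapped pi s t x y ->
  (bb -> ~~ Y x && Y y) -> (~~ bb -> Y x = Y y) ->
  L (pi t.+1) Y i = L (pi t) Y i + (bb && ((s t).+1 == i)).
Proof.
move=> H Hs H1 H2; have E := Lstep Y i H Hs.
case: bb H1 H2 => [/(_ isT)/andP [/negbTE Hx Hy] _ | _ /(_ isT) Hxy].
  by move: E; rewrite Hx Hy /=; lia.
by move: E; rewrite Hxy /=; lia.
Qed.
Local Notation NN := 'C(3 * 10, 2).

Definition samec (p0 : {perm 'I_(3 * 10)}) (x y : 'I_(3 * 10)) : bool :=
  [|| (pos p0 x < 10) && (pos p0 y < 10),
      (10 <= pos p0 x < 20) && (10 <= pos p0 y < 20) |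
      (20 <= pos p0 x) && (20 <= pos p0 y)].

Definition bic (pi : nat -> {perm 'I_(3 * 10)}) (s : nat -> nat) (t : nat) : bool :=
  [exists x, exists y, swapped pi s t x y && ~~ samec (pi 0) x y].

Definition cnt (pi : nat -> {perm 'I_(3 * 10)}) (s : nat -> nat) (i : nat) : nat :=
  \sum_(0 <= t < NN) (bic pi s t && ((s t).+1 == i)).

Lemma swapped_ex (pi : nat -> {perm 'I_(3 * 10)}) s t :
  adj_step (pi t) (pi t.+1) (s t) -> exists x y, swapped pi s t x y.
Proof.
case=> H _ _; have H' : s t < 3 * 10 by apply: ltnW.
exists (pi t (Ordinal H')), (pi t (Ordinal H)).
by rewrite swappedE !pos_app !eqxx.
Qed.

Lemma swapped_neq n (pi : nat -> {perm 'I_n}) s t x y : swapped pi s t x y -> x != y.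
Proof.
rewrite swappedE => /andP [/eqP H1 /eqP H2]; apply/negP => /eqP E.
by move: H2; rewrite -E H1 => /eqP; rewrite -(addn1 (s t)) -{1}(addn0 (s t)) eqn_add2l.
Qed.

Lemma bic_eq (pi : nat -> {perm 'I_(3 * 10)}) s t x y : swapped pi s t x y -> bic pi s t = ~~ samec (pi 0) x y.
Proof.
move=> Hs; apply/existsP/idP => [[x' /existsP [y' /andP [Hs' Hn]]]|Hn].
  move: Hs Hs'; rewrite !swappedE => /andP [/eqP H1 /eqP H2] /andP [/eqP H1' /eqP H2'].
  have Ex : pos (pi t) x' == pos (pi t) x by rewrite H1 H1'.
  have Ey : pos (pi t) y' == pos (pi t) y by rewrite H2 H2'.
  by move: Ex Ey; rewrite !pos_eq => /eqP <- /eqP <-.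
by exists x; apply/existsP; exists y; rewrite Hs.
Qed.

Lemma dir n (pi : nat -> {perm 'I_n}) s t x y : half_period pi s -> t < 'C(n, 2) -> swapped pi s t x y ->
  pos (pi 0) x < pos (pi 0) y.
Proof.
move=> Hhp Htn Hs; have Nxy := swapped_neq Hs.
have [tau Ht] := tau_ex Hhp Nxy.
have := Ht (Ordinal Htn); rewrite /= Hs /= => /esym/eqP Etau.
have := bef_tau Hhp Nxy Ht (ltnW Htn); rewrite -Etau /= ltnn addbF.
move: Hs; rewrite swappedE => /andP [/eqP -> /eqP ->]; by rewrite ltnSn.
Qed.
Lemma sum_cls (Q : nat -> bool) (p : {perm 'I_(3 * 10)}) :
  \sum_(x : 'I_(3 * 10)) Q (pos p x) = \sum_(q < 3 * 10) Q q.
Proof. exact: S0. Qed.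

Lemma cnt_val (pi : nat -> {perm 'I_(3 * 10)}) (s : nat -> nat)
    (a b c : 'I_10 -> 'I_(3 * 10)) :
  half_period pi s -> decomposition3 pi s a b c ->
  forall i, 10 <= i <= 20 -> cnt pi s i = 30 - i.
Proof.
move=> Hhp Hd i Hi.
have Hst := Hhp.1.
case: Hd => HD1 HD2 _.
have D : D1 pi a b c := HD1.
pose T1 := \max_(t : 'I_NN | swap_between pi s t (fun x => x \in codom a)
                                (fun x => x \in codom b)) t.+1.
have HT1a : forall t : 'I_NN, swap_between pi s t (fun x => x \in codom a)
    (fun x => x \in codom b) -> t < T1.
  by move=> t Ht; rewrite /T1; exact: (@leq_bigmax_cond _ _ (fun t : 'I_NN => (nat_of_ord t).+1) _ Ht).
have HT1b : forall t' : 'I_NN, swap_between pi s t' (fun x => x \in codom c)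
    (fun x => (x \in codom a) || (x \in codom b)) -> T1 <= t'.
  by move=> t' Ht'; rewrite /T1; apply/bigmax_leqP => t Ht; apply: (HD2 t t' Ht Ht').
have HT1N : T1 <= NN by rewrite /T1; apply/bigmax_leqP => t _; exact: ltn_ord.
have P1 : forall t x y, t < T1 -> swapped pi s t x y -> ~~ samec (pi 0) x y ->
    (pos (pi 0) x < 10) && (10 <= pos (pi 0) y < 20).
  move=> t x y Ht Hs Hn.
  have Htn : t < NN by apply: leq_trans HT1N.
  have Hd := dir Hhp Htn Hs.
  have Hx := pos_lt (pi 0) x; have Hy := pos_lt (pi 0) y.
  case: (boolP (20 <= pos (pi 0) y)) => Hy20.
    suff : T1 <= t by lia.
    apply: (HT1b (Ordinal Htn)); apply/existsP; exists x; apply/existsP; exists y.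
    rewrite Hs /= (memC x D) (memC y D) (memA x D) (memA y D) (memB x D) (memB y D).
    move: Hn; rewrite /samec; lia.
  move: Hn; rewrite /samec; lia.
have P2 : forall t x y, T1 <= t -> t < NN -> swapped pi s t x y -> ~~ samec (pi 0) x y ->
    (pos (pi 0) x < 20) && (20 <= pos (pi 0) y).
  move=> t x y Ht Htn Hs Hn.
  have Hd := dir Hhp Htn Hs.
  have Hx := pos_lt (pi 0) x; have Hy := pos_lt (pi 0) y.
  case: (boolP (20 <= pos (pi 0) y)) => Hy20.
    move: Hn; rewrite /samec; lia.
  suff : t < T1 by lia.
  apply: (HT1a (Ordinal Htn)); apply/existsP; exists x; apply/existsP; exists y.
  rewrite Hs /= (memA x D) (memA y D) (memB x D) (memB y D).
  move: Hn; rewrite /samec; lia.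
pose YB := fun x : 'I_(3 * 10) => 10 <= pos (pi 0) x < 20.
pose YC := fun x : 'I_(3 * 10) => 20 <= pos (pi 0) x.
have SB : forall t, 0 <= t -> t < T1 ->
    L (pi t.+1) YB i = L (pi t) YB i + (bic pi s t && ((s t).+1 == i)).
  move=> t _ Ht; have Htn : t < NN by apply: leq_trans HT1N.
  have [x [y Hs]] := swapped_ex (Hst t Htn).
  rewrite (bic_eq Hs); apply: (Lstep2 _ (Hst t Htn) Hs).
    by move=> Hn; have := P1 t x y Ht Hs Hn; rewrite /YB; lia.
  move/negbNE; rewrite /samec /YB => Hsm; apply/idP/idP; lia.
have SC20 : forall t, 0 <= t -> t < T1 ->
    L (pi t.+1) YC 20 = L (pi t) YC 20 + (false && ((s t).+1 == 20)).
  move=> t _ Ht; have Htn : t < NN by apply: leq_trans HT1N.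
  have [x [y Hs]] := swapped_ex (Hst t Htn).
  apply: (Lstep2 _ (Hst t Htn) Hs) => // _.
  case: (boolP (samec (pi 0) x y)) => Hsm.
    move: Hsm; rewrite /samec /YC => Hsm; apply/idP/idP; lia.
  have := P1 t x y Ht Hs Hsm; rewrite /YC => H; apply/idP/idP; lia.
have SC : forall t, T1 <= t -> t < NN ->
    L (pi t.+1) YC i = L (pi t) YC i + (bic pi s t && ((s t).+1 == i)).
  move=> t Ht Htn.
  have [x [y Hs]] := swapped_ex (Hst t Htn).
  rewrite (bic_eq Hs); apply: (Lstep2 _ (Hst t Htn) Hs).
    by move=> Hn; have := P2 t x y Ht Htn Hs Hn; rewrite /YC; lia.
  move/negbNE; rewrite /samec /YC => Hsm; apply/idP/idP; lia.
have E1 := tele (f := fun t => L (pi t) YB i) (leq0n T1) SB.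
have E2 := tele (f := fun t => L (pi t) YC i) HT1N SC.
have E3 := tele (f := fun t => L (pi t) YC 20) (leq0n T1) SC20.
rewrite /= big1_eq addn0 in E3.
have V0C : L (pi 0) YC 20 = 0.
  rewrite /L /YC (sum_cls (fun q => (20 <= q) && (q < 20))).
  rewrite big1 // => q _.
  have : ~~ ((20 <= q) && (q < 20)) by lia.
  by move/negbTE ->.
have V0B : L (pi 0) YB i = i - 10.
  rewrite /L /YB (sum_cls (fun q => (10 <= q < 20) && (q < i))).
  rewrite (eq_bigr (fun q : 'I_(3 * 10) => nat_of_bool (10 <= q < i))); last first.
    by move=> q _; congr nat_of_bool; apply/idP/idP; lia.
  rewrite sum_range; lia.
have HC0 : L (pi T1) YC 20 = 0 by rewrite E3 V0C.
have VT1C : L (pi T1) YC i = 0.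
  apply/eqP; rewrite -leqn0 -[X in _ <= X]HC0; apply: leq_sum => x _.
  by case: (YC x); case: ltnP => //= H; apply/ltP; lia.
have HCpos : forall x, 20 <= pos (pi 0) x -> 20 <= pos (pi T1) x.
  move: HC0 => /eqP; rewrite sum_nat_eq0 => /forallP H x Hx.
  by move: (H x); rewrite /YC Hx /=; case: ltnP.
have sumB : \sum_x YB x = 10.
  rewrite /YB (sum_cls (fun q => 10 <= q < 20)) sum_range //.
have sumC : \sum_x YC x = 10.
  rewrite /YC (sum_cls (fun q => 20 <= q)).
  rewrite (eq_bigr (fun q : 'I_(3 * 10) => nat_of_bool (20 <= q < 30))); last first.
    by move=> q _; have Hq := ltn_ord q; congr nat_of_bool; apply/idP/idP; lia.
  by rewrite sum_range.
have VB : L (pi T1) YB i = 10.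
  rewrite (@LG _ (pi T1) YB i); [by rewrite sumB; lia | lia |].
  move=> y z Hy Hz Hzi.
  have Hz20 : pos (pi 0) z < 20.
    case: (leqP 20 (pos (pi 0) z)) => // H; have := HCpos z H; lia.
  have HzA : pos (pi 0) z < 10 by move: Hz; rewrite /YB; lia.
  have Nzy : z != y by apply/eqP => E; move: Hz; rewrite E Hy.
  have [tau Ht] := tau_ex Hhp Nzy.
  have Htau : swapped pi s tau z y || swapped pi s tau y z by rewrite Ht eqxx.
  have HtT : tau < T1.
    apply: HT1a; apply/existsP; case/orP: Htau => Hs;
      [exists z; apply/existsP; exists y | exists y; apply/existsP; exists z];
      rewrite Hs /= (memA z D) (memA y D) (memB z D) (memB y D); move: Hy; rewrite /YB; lia.
  have := bef_tau Hhp Nzy Ht HT1N; rewrite HtT addbT.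
  have Hneq : pos (pi T1) y != pos (pi T1) z by rewrite pos_eq eq_sym.
  have -> : pos (pi 0) z < pos (pi 0) y by move: Hy; rewrite /YB; lia.
  move=> /= /negbT; lia.
have VC : L (pi NN) YC i = 10.
  rewrite (@LG _ (pi NN) YC i); [by rewrite sumC; lia | lia |].
  move=> y z Hy Hz Hzi.
  have Nzy : z != y by apply/eqP => E; move: Hz; rewrite E Hy.
  have [tau Ht] := tau_ex Hhp Nzy.
  have := bef_tau Hhp Nzy Ht (leqnn NN); rewrite (ltn_ord tau) addbT.
  have Hneq : pos (pi NN) y != pos (pi NN) z by rewrite pos_eq eq_sym.
  have -> : pos (pi 0) z < pos (pi 0) y by move: Hy Hz; rewrite /YC; lia.
  move=> /= /negbT; lia.
rewrite /cnt (@big_cat_nat _ _ _ T1) //=.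
rewrite /= in E1 E2.
rewrite VB V0B in E1; rewrite VC VT1C in E2.
lia.
Qed.
Theorem corollary2 (pi : nat -> {perm 'I_(3 * 10)}) (s : nat -> nat)
    (a b c : 'I_10 -> 'I_(3 * 10)) :
  half_period pi s -> decomposition3 pi s a b c ->
  forall k, 11 <= k <= 14 -> N_bi pi s a b c k = 30.
Proof.
move=> Hhp Hd k Hk.
have D : D1 pi a b c by case: Hd.
have -> : N_bi pi s a b c k =
    #|[set t : 'I_NN | critical (3 * 10) k (s t).+1 && bic pi s t]|.
  rewrite /N_bi; apply: eq_card => t; rewrite !inE; congr (_ && _).
  apply: eq_existsb => x; apply: eq_existsb => y.
  by rewrite /samec !(memA _ D) !(memB _ D) !(memC _ D).
rewrite -sum1_card big_mkcond /=.
rewrite (eq_bigr (fun t : 'I_NN => (bic pi s t && ((s t).+1 == k)) +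
                                  (bic pi s t && ((s t).+1 == 3 * 10 - k)))); last first.
  move=> t _; rewrite inE /critical; case: (bic pi s t); rewrite /= ?andbT ?andbF //.
  by case: eqP => E1; case: eqP => E2 //=; lia.
have Hc : forall i, \sum_(t < NN) (bic pi s t && ((s t).+1 == i)) = cnt pi s i.
  by move=> i; rewrite /cnt big_mkord.
rewrite big_split /= !Hc !(cnt_val Hhp Hd); lia.
Qed.
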